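(* There exists a constant $C$ such that for every integer $t\ge0$ whose binary expansion has $M$ maximal blocks of $1$s, \[|\kappa_2(t)|\le CM,\quad |\kappa_3(t)|\le CM,\quad |\kappa_4(t)|\le CM,\quad |\kappa_5(t)|\le CM.\]
   Context: $s(n)$ is the number of $1$s in the binary expansion of $n\ge0$. For integers $j$ and $t\ge0$, $\delta(j,t)=\lim_{N\to\infty}\frac1N|\{0\le n<N: s(n+t)-s(n)=j\}|$, a probability distribution on $\mathbb Z$. $\kappa_j(t)$ denotes the $j$-th cumulant of this distribution, i.e. the real numbers with $\log\sum_{k\in\mathbb Z}\delta(k,t)e^{2\pi i k\vartheta}=\sum_{j\ge0}\frac{\kappa_j(t)}{j!}(2\pi i\vartheta)^j$ for $\vartheta$ near $0$. A maximal block of $1$s is a maximal run of consecutive binary digits equal to $1$. *)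

(* Defs.v *)
From Stdlib Require Import Reals ZArith Arith List.
From Coquelicot Require Import Coquelicot.
Import ListNotations.
Open Scope R_scope.

Definition s (n : nat) : nat :=
  length (filter (fun i => Nat.testbit n i) (seq 0 (S (Nat.log2 n)))).

Definition blocks (t : nat) : nat :=
  length (filter (fun i => Nat.testbit t i &&
                           (Nat.eqb i 0 || negb (Nat.testbit t (i - 1))))%bool
                 (seq 0 (S (Nat.log2 t)))).

Definition count_diff (j : Z) (t N : nat) : nat :=
  length (filter (fun n => Z.eqb (Z.of_nat (s (n + t)) - Z.of_nat (s n))%Z j)
                 (seq 0 N)).

Definition delta (j : Z) (t : nat) : R :=
  real (Lim_seq (fun N => INR (count_diff j t N) / INR N)).

(* Moment generating function x |-> sum_{k in Z} delta(k,t) e^{k x},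
   the sum over Z split into k >= 0 and k <= -1. *)
Definition mgf (t : nat) (x : R) : R :=
  Series (fun k => delta (Z.of_nat k) t * exp (INR k * x))
  + Series (fun k => delta (- Z.of_nat (S k))%Z t * exp (- INR (S k) * x)).

Definition cumulant (t j : nat) : R :=
  Derive_n (fun x => ln (mgf t x)) j 0.

(* Main.v *)
Require Import Defs.
From Stdlib Require Import Reals ZArith Arith List Lia Lra FunctionalExtensionality.
From Coquelicot Require Import Coquelicot.
Import ListNotations.
Open Scope R_scope.

Definition cnt (f : nat -> bool) (K : nat) : nat := length (filter f (seq 0 K)).

Lemma filter_map_S (f : nat -> bool) l :
  length (filter f (map S l)) = length (filter (fun i => f (S i)) l).
Proof. induction l as [|a l IH]; simpl; auto. destruct (f (S a)); simpl; auto. Qed.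

Lemma cnt_S f K : cnt f (S K) = ((if f 0%nat then 1 else 0) + cnt (fun i => f (S i)) K)%nat.
Proof.
  unfold cnt. simpl. rewrite <- seq_shift. destruct (f 0%nat); simpl; rewrite filter_map_S; auto.
Qed.

Lemma cnt_ext f g K : (forall i, f i = g i) -> cnt f K = cnt g K.
Proof. intros H. unfold cnt. f_equal. apply filter_ext. auto. Qed.

Lemma cnt_add f K L : cnt f (K + L) = (cnt f K + length (filter f (seq K L)))%nat.
Proof. unfold cnt. rewrite seq_app, filter_app, length_app. reflexivity. Qed.

Lemma filter_false_len f a L : (forall i, (a <= i)%nat -> f i = false) -> length (filter f (seq a L)) = 0%nat.
Proof.
  revert a; induction L as [|L IH]; intros a H; simpl; auto.
  rewrite H by lia. apply IH. intros; apply H; lia.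
Qed.

Lemma cnt_large f n K : (forall i, (n < i)%nat -> f i = false) -> (S n <= K)%nat ->
  cnt f K = cnt f (S n).
Proof.
  intros H HK. replace K with (S n + (K - S n))%nat by lia.
  rewrite cnt_add, filter_false_len; [lia|]. intros; apply H; lia.
Qed.

Lemma s_cnt n K : (S (Nat.log2 n) <= K)%nat -> s n = cnt (Nat.testbit n) K.
Proof.
  intros HK. unfold s. symmetry. apply (cnt_large _ (Nat.log2 n)); auto.
  intros i Hi. apply Nat.bits_above_log2. auto.
Qed.

Lemma testbit_2b_0 m (b : bool) : Nat.testbit (2*m + Nat.b2n b) 0 = b.
Proof. destruct b; simpl Nat.b2n. rewrite Nat.testbit_odd_0; auto. rewrite Nat.add_0_r, Nat.testbit_even_0; auto. Qed.

Lemma testbit_2b_S m (b : bool) i : Nat.testbit (2*m + Nat.b2n b) (S i) = Nat.testbit m i.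
Proof. destruct b; simpl Nat.b2n. apply Nat.testbit_odd_succ; lia. rewrite Nat.add_0_r; apply Nat.testbit_even_succ; lia. Qed.

Lemma s_2b m (b : bool) : s (2*m + Nat.b2n b) = (Nat.b2n b + s m)%nat.
Proof.
  set (K := S (S (Nat.log2 (2*m + Nat.b2n b) + Nat.log2 m))).
  rewrite (s_cnt _ K) by (unfold K; lia).
  unfold K. rewrite cnt_S, testbit_2b_0.
  rewrite (cnt_ext _ (Nat.testbit m)) by (intros; apply testbit_2b_S).
  rewrite <- (s_cnt m) by lia. destruct b; simpl; lia.
Qed.

Lemma s_double m : s (2*m) = s m.
Proof. pose proof (s_2b m false). simpl Nat.b2n in H. rewrite Nat.add_0_r in H. exact H. Qed.
Lemma s_double1 m : s (2*m+1) = S (s m).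
Proof. exact (s_2b m true). Qed.

Definition bl (t i : nat) : bool :=
  (Nat.testbit t i && (Nat.eqb i 0 || negb (Nat.testbit t (i - 1))))%bool.

Lemma blocks_cnt t K : (S (Nat.log2 t) <= K)%nat -> blocks t = cnt (bl t) K.
Proof.
  intros HK. unfold blocks. symmetry. apply (cnt_large _ (Nat.log2 t)); auto.
  intros i Hi. unfold bl. rewrite Nat.bits_above_log2; auto.
Qed.

Lemma blocks_2b m (b : bool) : blocks (2*m + Nat.b2n b) =
  (blocks m + (if b then (if Nat.odd m then 0 else 1) else 0))%nat.
Proof.
  set (K := S (S (Nat.log2 (2*m + Nat.b2n b) + Nat.log2 m))).
  rewrite (blocks_cnt _ K) by (unfold K; lia).
  unfold K. rewrite cnt_S. rewrite (blocks_cnt m (S (Nat.log2 (2 * m + Nat.b2n b) + Nat.log2 m))) by lia.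
  rewrite !cnt_S.
  rewrite (cnt_ext (fun i => bl (2 * m + Nat.b2n b) (S (S i))) (fun i => bl m (S i))).
  2:{ intros i. unfold bl. rewrite !Nat.sub_succ, !Nat.sub_0_r.
        rewrite !testbit_2b_S. reflexivity. }
  unfold bl. change (1 - 1)%nat with 0%nat. rewrite testbit_2b_0, testbit_2b_S. simpl Nat.eqb.
  rewrite !Nat.bit0_odd.
  destruct b, (Nat.odd m); cbv [andb orb negb Nat.b2n]; lia.
Qed.

Lemma blocks_double m : blocks (2*m) = blocks m.
Proof. pose proof (blocks_2b m false). simpl Nat.b2n in H. rewrite Nat.add_0_r in H. rewrite H. lia. Qed.
Lemma blocks_double1 m : blocks (2*m+1) = (blocks m + (if Nat.odd m then 0 else 1))%nat.
Proof. exact (blocks_2b m true). Qed.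

Section BREC.
Variable A : Type.
Variables (b0 b1 : A) (mix : A -> A -> A).
Hypothesis fix1 : mix b0 b1 = b1.

Fixpoint bpos (q : positive) : A * A :=
  match q with
  | xH => (b1, b1)
  | xO q' => let (u, v) := bpos q' in (u, mix u v)
  | xI q' => let (u, v) := bpos q' in (mix u v, v)
  end.

Definition bnat (t : nat) : A * A :=
  match t with O => (b0, b1) | _ => bpos (Pos.of_nat t) end.

Lemma pos_dbl t : Pos.of_nat (2 * S t) = xO (Pos.of_nat (S t)).
Proof. rewrite Nat2Pos.inj_mul by lia. reflexivity. Qed.
Lemma pos_dbl1 t : Pos.of_nat (2 * S t + 1) = xI (Pos.of_nat (S t)).
Proof. rewrite Nat.add_1_r, Nat2Pos.inj_succ by lia. rewrite pos_dbl. reflexivity. Qed.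

Lemma bnat_even t : bnat (2*t) = (fst (bnat t), mix (fst (bnat t)) (snd (bnat t))).
Proof.
  destruct t as [|t]. simpl. rewrite fix1. reflexivity.
  unfold bnat. replace (2 * S t)%nat with (S (S (2*t)))%nat at 1 by lia.
  replace (S (S (2*t))) with (2 * S t)%nat by lia. rewrite pos_dbl.
  set (q := Pos.of_nat (S t)). simpl bpos. destruct (bpos q); reflexivity.
Qed.

Lemma bnat_odd t : bnat (2*t+1) = (mix (fst (bnat t)) (snd (bnat t)), snd (bnat t)).
Proof.
  destruct t as [|t]. simpl. rewrite fix1. reflexivity.
  unfold bnat. replace (2 * S t + 1)%nat with (S (S (S (2*t))))%nat at 1 by lia.
  replace (S (S (S (2*t)))) with (2 * S t + 1)%nat by lia. rewrite pos_dbl1.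
  set (q := Pos.of_nat (S t)). simpl bpos. destruct (bpos q); reflexivity.
Qed.

Lemma bin_ind (P : nat -> Prop) :
  P 0%nat -> P 1%nat -> (forall t, P t -> P (2*t)%nat) -> (forall t, P t -> P (S t) -> P (2*t+1)%nat) ->
  forall t, P t /\ P (S t).
Proof.
  intros H0 H1 He Ho t. induction t as [t IH] using lt_wf_ind.
  destruct t as [|t']. auto.
  pose proof (Nat.div2_odd (S t')) as Hd. set (u := Nat.div2 (S t')) in *.
  assert (Hu : (u < S t')%nat) by (apply Nat.lt_div2; lia).
  destruct (IH u Hu) as [Pu PSu].
  destruct (Nat.odd (S t')); simpl Nat.b2n in Hd.
  - rewrite Hd. split. apply Ho; auto. replace (S (2*u+1)) with (2 * S u)%nat by lia. auto.
  - rewrite Nat.add_0_r in Hd. rewrite Hd. split; auto. rewrite <- Nat.add_1_r. auto.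
Qed.

Lemma bnat_snd t : snd (bnat t) = fst (bnat (S t)).
Proof.
  revert t.
  assert (H : forall t, snd (bnat t) = fst (bnat (S t)) /\ snd (bnat (S t)) = fst (bnat (S (S t)))).
  { apply (bin_ind (fun t => snd (bnat t) = fst (bnat (S t)))).
    - reflexivity.
    - simpl. reflexivity.
    - intros t H. rewrite bnat_even. replace (S (2*t)) with (2*t+1)%nat by lia. rewrite bnat_odd. reflexivity.
    - intros t H H'. rewrite bnat_odd. replace (S (2*t+1)) with (2*S t)%nat by lia.
      rewrite bnat_even. simpl. auto. }
  intros t; apply H.
Qed.

Definition bval t := fst (bnat t).
Lemma bval_even t : bval (2*t) = bval t.
Proof. unfold bval. rewrite bnat_even. reflexivity. Qed.
Lemma bval_odd t : bval (2*t+1) = mix (bval t) (bval (S t)).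
Proof. unfold bval. rewrite bnat_odd, bnat_snd. reflexivity. Qed.
Lemma bval_0 : bval 0 = b0.
Proof. reflexivity. Qed.
Lemma bval_1 : bval 1 = b1.
Proof. reflexivity. Qed.
End BREC.

Definition Dd (n t : nat) : Z := (Z.of_nat (s (n + t)) - Z.of_nat (s n))%Z.
Definition ind (b : bool) : nat := if b then 1%nat else 0%nat.

Lemma cd_S j t N : count_diff j t (S N) = (count_diff j t N + ind (Z.eqb (Dd N t) j))%nat.
Proof.
  unfold count_diff. rewrite seq_S, filter_app, length_app. simpl.
  unfold Dd, ind. destruct (Z.eqb _ j); simpl; lia.
Qed.

Lemma cd_0 j t : count_diff j t 0 = 0%nat.
Proof. reflexivity. Qed.

Lemma D_ee m t : Dd (2*m) (2*t) = Dd m t.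
Proof. unfold Dd. replace (2*m+2*t)%nat with (2*(m+t))%nat by lia. rewrite !s_double. reflexivity. Qed.
Lemma D_oe m t : Dd (2*m+1) (2*t) = Dd m t.
Proof. unfold Dd. replace (2*m+1+2*t)%nat with (2*(m+t)+1)%nat by lia. rewrite !s_double1. lia. Qed.
Lemma D_eo m t : Dd (2*m) (2*t+1) = (Dd m t + 1)%Z.
Proof. unfold Dd. replace (2*m+(2*t+1))%nat with (2*(m+t)+1)%nat by lia. rewrite s_double1, s_double. lia. Qed.
Lemma D_oo m t : Dd (2*m+1) (2*t+1) = (Dd m (S t) - 1)%Z.
Proof. unfold Dd. replace (2*m+1+(2*t+1))%nat with (2*(m+S t))%nat by lia. rewrite s_double1, s_double. lia. Qed.
Lemma D_0 n : Dd n 0 = 0%Z.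
Proof. unfold Dd. rewrite Nat.add_0_r. lia. Qed.

Lemma cd_even j t N : count_diff j (2*t) (2*N) = (2 * count_diff j t N)%nat.
Proof.
  induction N as [|N IH]. reflexivity.
  replace (2 * S N)%nat with (S (S (2*N))) by lia.
  rewrite !cd_S, IH. replace (S (2*N)) with (2*N+1)%nat by lia. rewrite D_ee, D_oe. lia.
Qed.

Lemma cd_odd j t N : count_diff j (2*t+1) (2*N) =
  (count_diff (j-1) t N + count_diff (j+1) (S t) N)%nat.
Proof.
  induction N as [|N IH]. reflexivity.
  replace (2 * S N)%nat with (S (S (2*N))) by lia.
  rewrite !cd_S, IH. replace (S (2*N)) with (2*N+1)%nat by lia. rewrite D_eo, D_oo.
  unfold ind.
  destruct (Z.eqb_spec (Dd N t + 1) j), (Z.eqb_spec (Dd N t) (j-1)), 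
           (Z.eqb_spec (Dd N (S t) - 1) j), (Z.eqb_spec (Dd N (S t)) (j+1)); lia.
Qed.

Lemma cd_t0 j N : count_diff j 0 N = if Z.eqb j 0 then N else 0%nat.
Proof.
  induction N as [|N IH]. destruct (Z.eqb j 0); reflexivity.
  rewrite cd_S, IH, D_0. unfold ind. destruct (Z.eqb_spec j 0), (Z.eqb_spec 0 j); subst; simpl; lia.
Qed.

Definition mixZ (a b : Z -> R) : Z -> R := fun j => (a (j - 1)%Z + b (j + 1)%Z) / 2.
Definition p0 (j : Z) : R := if Z.eqb j 0 then 1 else 0.
Definition p1 (j : Z) : R := if Z.leb j 1 then (/2) ^ (Z.to_nat (2 - j)) else 0.

Lemma p1_fix : mixZ p0 p1 = p1.
Proof.
  apply functional_extensionality. intros j. unfold mixZ, p0, p1.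
  destruct (Z.eqb_spec (j-1) 0).
  - replace j with 1%Z by lia. simpl. field.
  - destruct (Z.leb_spec (j+1) 1), (Z.leb_spec j 1); try lia.
    + replace (Z.to_nat (2 - j)) with (S (Z.to_nat (2 - (j+1)))) by lia. simpl. field.
    + lra.
Qed.

Definition pp (t : nat) : Z -> R := bval _ p0 p1 mixZ t.
Lemma pp_even t : pp (2*t) = pp t.
Proof. apply bval_even, p1_fix. Qed.
Lemma pp_odd t j : pp (2*t+1) j = (pp t (j-1)%Z + pp (S t) (j+1)%Z) / 2.
Proof. unfold pp. rewrite bval_odd by apply p1_fix. reflexivity. Qed.
Lemma pp_0 : pp 0 = p0. Proof. reflexivity. Qed.
Lemma pp_1 : pp 1 = p1. Proof. reflexivity. Qed.

Lemma p1_nonneg j : 0 <= p1 j.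
Proof. unfold p1. destruct (Z.leb j 1). apply pow_le. lra. lra. Qed.
Lemma p1_le j : p1 j <= /2.
Proof.
  unfold p1. destruct (Z.leb_spec j 1). 2: lra.
  replace (Z.to_nat (2 - j)) with (S (Z.to_nat (1 - j))) by lia. set (k := Z.to_nat (1-j)).
  assert (0 <= (/2) ^ k <= 1). { split. apply pow_le; lra. rewrite <- (pow1 k). apply pow_incr. lra. }
  simpl. nra.
Qed.
Lemma p1_dbl j : (j <= 0)%Z -> 2 * p1 j = p1 (j+1).
Proof.
  intros H. unfold p1. destruct (Z.leb_spec j 1), (Z.leb_spec (j+1) 1); try lia.
  replace (Z.to_nat (2 - j)) with (S (Z.to_nat (2 - (j+1)))) by lia. set (k := Z.to_nat (2 - (j+1))). simpl. field.
Qed.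
Lemma p1_1 : p1 1 = /2. Proof. unfold p1. simpl. field. Qed.
Lemma p1_big j : (2 <= j)%Z -> p1 j = 0.
Proof. intros H. unfold p1. destruct (Z.leb_spec j 1); try lia. reflexivity. Qed.

Lemma N_split N : exists M b, N = (2*M + Nat.b2n b)%nat.
Proof. exists (Nat.div2 N), (Nat.odd N). apply Nat.div2_odd. Qed.

Lemma cd1_even j M : count_diff j 1 (2*M) = (ind (Z.eqb j 1) * M + count_diff (j+1) 1 M)%nat.
Proof.
  change (count_diff j (2*0+1) (2*M) = (ind (Z.eqb j 1) * M + count_diff (j+1) 1 M)%nat).
  rewrite cd_odd, cd_t0. unfold ind. destruct (Z.eqb_spec (j-1) 0), (Z.eqb_spec j 1); try lia.
Qed.
Lemma cd1_odd j M : count_diff j 1 (2*M+1) = (count_diff j 1 (2*M) + ind (Z.eqb 1 j))%nat.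
Proof.
  rewrite Nat.add_1_r, cd_S. replace (Dd (2*M) 1) with 1%Z. reflexivity.
  change (1%Z = Dd (2*M) (2*0+1)). rewrite D_eo, D_0. reflexivity.
Qed.

Definition B1 (j : Z) : R := if Z.leb j 1 then 2 - 2 * p1 j else 0.

Lemma cd1_bound N : forall j, Rabs (INR (count_diff j 1 N) - INR N * p1 j) <= B1 j.
Proof.
  induction N as [N IH] using lt_wf_ind. intros j.
  assert (HB : 0 <= B1 j). { unfold B1. destruct (Z.leb j 1). pose proof (p1_le j). lra. lra. }
  destruct N as [|N'].
  { simpl. rewrite Rmult_0_l, Rminus_0_r, Rabs_R0. auto. }
  destruct (N_split (S N')) as (M & b & HN). rewrite HN.
  assert (HM : (M < S N')%nat) by (destruct b; simpl in HN; lia).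
  pose proof (IH M HM (j+1)%Z) as IH1.
  assert (Heven : Rabs (INR (count_diff j 1 (2*M)) - INR (2*M) * p1 j) <= B1 j - (if Z.leb j 0 then p1 j else if Z.eqb j 1 then /2 else 0)).
  { rewrite cd1_even, plus_INR, mult_INR, mult_INR. replace (INR 2) with 2 by (simpl; lra).
    set (X := INR (count_diff (j + 1) 1 M)) in *.
    unfold B1 in *. destruct (Z.leb_spec j 0).
    - destruct (Z.leb_spec (j+1) 1); try lia. destruct (Z.leb_spec j 1); try lia.
      unfold ind. destruct (Z.eqb_spec j 1); try lia. replace (INR 0) with 0 by reflexivity.
      pose proof (p1_dbl j H).
      replace (0 * INR M + X - 2 * INR M * p1 j) with (X - INR M * p1 (j + 1)) by (rewrite <- H2; ring).
      pose proof (p1_nonneg j). lra.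
    - destruct (Z.eqb_spec j 1).
      + subst j. destruct (Z.leb_spec (1+1) 1); try lia. unfold ind; simpl Z.eqb. rewrite p1_1.
        replace (INR 1) with 1 by reflexivity.
        replace (1 * INR M + X - 2 * INR M * / 2) with (X - INR M * p1 (1+1)) by (rewrite p1_big by lia; field).
        simpl in *. lra.
      + destruct (Z.leb_spec (j+1) 1); try lia.
        unfold ind. destruct (Z.eqb_spec j 1); try lia. replace (INR 0) with 0 by reflexivity.
        rewrite !p1_big in * by lia.
        replace (0 * INR M + X - 2 * INR M * 0) with (X - INR M * 0) by ring.
        destruct (Z.leb_spec j 1); try lia. lra. }
  destruct b; simpl Nat.b2n.
  - rewrite cd1_odd, plus_INR. replace (INR (2*M+1)) with (INR (2*M) + 1) by (rewrite plus_INR; simpl; lra).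
    unfold ind. destruct (Z.eqb_spec 1 j).
    + subst j. unfold B1 in *. simpl Z.leb in *. simpl Z.eqb in *. cbv iota in *. rewrite p1_1 in *. cbv iota. replace (INR 1) with 1 by reflexivity.
      replace (INR (count_diff 1 1 (2 * M)) + 1 - (INR (2 * M) + 1) * / 2) with
        ((INR (count_diff 1 1 (2 * M)) - INR (2 * M) * / 2) + /2) by field.
      eapply Rle_trans. apply Rabs_triang. rewrite (Rabs_right (/2)) by lra. change ((1 <=? 1)%Z) with true in *. change ((1 <=? 0)%Z) with false in *. cbv iota in *. lra.
    + cbv iota. replace (INR 0) with 0 by reflexivity.
      replace (INR (count_diff j 1 (2 * M)) + 0 - (INR (2 * M) + 1) * p1 j) with
        ((INR (count_diff j 1 (2 * M)) - INR (2 * M) * p1 j) - p1 j) by ring.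
      eapply Rle_trans. apply Rabs_triang. rewrite Rabs_Ropp.
      pose proof (p1_nonneg j). rewrite (Rabs_right (p1 j)) by lra.
      destruct (Z.leb_spec j 0). lra. destruct (Z.eqb_spec j 1); try lia.
      rewrite p1_big in * by lia. lra.
  - rewrite Nat.add_0_r. eapply Rle_trans. exact Heven.
    destruct (Z.leb j 0). pose proof (p1_nonneg j); lra. destruct (Z.eqb j 1); lra.
Qed.

Definition Perr (t : nat) : Prop := exists E, forall j N,
  Rabs (INR (count_diff j t N) - INR N * pp t j) <= E /\ Rabs (pp t j) <= E.

Lemma Perr_0 : Perr 0.
Proof.
  exists 1. intros j N. rewrite pp_0, cd_t0. unfold p0.
  destruct (Z.eqb j 0).
  - rewrite Rmult_1_r, Rminus_diag, Rabs_R0, Rabs_R1. lra.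
  - replace (INR 0) with 0 by reflexivity. rewrite Rmult_0_r, Rminus_0_r, Rabs_R0. lra.
Qed.

Lemma Perr_1 : Perr 1.
Proof.
  exists 2. intros j N. rewrite pp_1. split.
  - eapply Rle_trans. apply cd1_bound. unfold B1. destruct (Z.leb j 1). pose proof (p1_nonneg j); lra. lra.
  - pose proof (p1_nonneg j). pose proof (p1_le j). rewrite Rabs_right; lra.
Qed.

Lemma INR_2M M : INR (2*M) = 2 * INR M.
Proof. rewrite mult_INR. reflexivity. Qed.

Lemma ind_le b : 0 <= INR (ind b) <= 1.
Proof. destruct b; simpl; lra. Qed.

Lemma Perr_even t : Perr t -> Perr (2*t).
Proof.
  intros [E HE]. exists (3*E+1). intros j N. rewrite pp_even.
  destruct (HE j 0%nat) as [_ Hp].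
  assert (E0 : 0 <= E) by (eapply Rle_trans; [apply Rabs_pos|exact Hp]).
  split; [|lra].
  destruct (N_split N) as (M & b & ->). destruct (HE j M) as [H1 _].
  assert (Hev : Rabs (INR (count_diff j (2 * t) (2 * M)) - INR (2*M) * pp t j) <= 2*E).
  { rewrite cd_even, !INR_2M.
    replace (2 * INR (count_diff j t M) - 2 * INR M * pp t j) with (2 * (INR (count_diff j t M) - INR M * pp t j)) by ring.
    rewrite Rabs_mult, Rabs_right by lra. lra. }
  destruct b; simpl Nat.b2n.
  - rewrite Nat.add_1_r, cd_S, plus_INR, S_INR.
    replace (INR (count_diff j (2 * t) (2 * M)) + INR (ind (Dd (2 * M) (2 * t) =? j)%Z) - (INR (2 * M) + 1) * pp t j)
      with ((INR (count_diff j (2 * t) (2 * M)) - INR (2*M) * pp t j) + (INR (ind (Dd (2 * M) (2 * t) =? j)%Z) - pp t j)) by ring.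
    eapply Rle_trans. apply Rabs_triang. eapply Rle_trans. apply Rplus_le_compat. exact Hev. apply Rabs_triang.
    rewrite Rabs_Ropp. pose proof (ind_le (Dd (2 * M) (2 * t) =? j)%Z). rewrite (Rabs_right (INR _)) by lra. lra.
  - rewrite Nat.add_0_r. lra.
Qed.

Lemma Perr_odd t : Perr t -> Perr (S t) -> Perr (2*t+1).
Proof.
  intros [E1 HE1] [E2 HE2]. exists (2*(E1+E2)+1). intros j N. rewrite pp_odd.
  destruct (HE1 (j-1)%Z 0%nat) as [_ Hp1]. destruct (HE2 (j+1)%Z 0%nat) as [_ Hp2].
  assert (E10 : 0 <= E1) by (eapply Rle_trans; [apply Rabs_pos|exact Hp1]).
  assert (E20 : 0 <= E2) by (eapply Rle_trans; [apply Rabs_pos|exact Hp2]).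
  assert (Hpp : Rabs ((pp t (j - 1) + pp (S t) (j + 1)) / 2) <= E1 + E2).
  { unfold Rdiv. rewrite Rabs_mult, (Rabs_right (/2)) by lra.
    pose proof (Rabs_triang (pp t (j - 1)) (pp (S t) (j + 1))). lra. }
  split; [|lra].
  destruct (N_split N) as (M & b & ->). destruct (HE1 (j-1)%Z M) as [H1 _]. destruct (HE2 (j+1)%Z M) as [H2 _].
  assert (Hev : Rabs (INR (count_diff j (2 * t + 1) (2 * M)) - INR (2*M) * ((pp t (j - 1) + pp (S t) (j + 1)) / 2)) <= E1 + E2).
  { rewrite cd_odd, plus_INR, !INR_2M.
    replace (INR (count_diff (j - 1) t M) + INR (count_diff (j + 1) (S t) M) - 2 * INR M * ((pp t (j - 1) + pp (S t) (j + 1)) / 2))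
      with ((INR (count_diff (j - 1) t M) - INR M * pp t (j-1)) + (INR (count_diff (j + 1) (S t) M) - INR M * pp (S t) (j+1))) by field.
    eapply Rle_trans. apply Rabs_triang. lra. }
  destruct b; simpl Nat.b2n.
  - replace (2*M+1)%nat with (S (2*M)) by lia. rewrite cd_S, plus_INR, S_INR.
    set (q := (pp t (j - 1) + pp (S t) (j + 1)) / 2) in *.
    replace (INR (count_diff j (2 * t + 1) (2 * M)) + INR (ind (Dd (2 * M) (2 * t + 1) =? j)%Z) - (INR (2 * M) + 1) * q)
      with ((INR (count_diff j (2 * t + 1) (2 * M)) - INR (2*M) * q) + (INR (ind (Dd (2 * M) (2 * t + 1) =? j)%Z) - q)) by ring.
    eapply Rle_trans. apply Rabs_triang. eapply Rle_trans. apply Rplus_le_compat. exact Hev. apply Rabs_triang.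
    rewrite Rabs_Ropp. pose proof (ind_le (Dd (2 * M) (2 * t + 1) =? j)%Z). rewrite (Rabs_right (INR _)) by lra. lra.
  - rewrite Nat.add_0_r. lra.
Qed.

Lemma Perr_all t : Perr t.
Proof.
  apply (bin_ind Perr Perr_0 Perr_1 Perr_even Perr_odd t).
Qed.

Lemma delta_pp j t : delta j t = pp t j.
Proof.
  destruct (Perr_all t) as [E HE].
  unfold delta. replace (Lim_seq (fun N => INR (count_diff j t N) / INR N)) with (Finite (pp t j)). reflexivity.
  symmetry. apply is_lim_seq_unique.
  apply (is_lim_seq_le_le_loc (fun N => pp t j - E / INR N) _ (fun N => pp t j + E / INR N)).
  - exists 1%nat. intros N HN. destruct (HE j N) as [H _].
    assert (HNp : 0 < INR N) by (apply lt_0_INR; lia).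
    replace (INR (count_diff j t N) / INR N) with (pp t j + (INR (count_diff j t N) - INR N * pp t j) / INR N) by (field; lra).
    apply Rabs_le_between in H.
    split; apply Rplus_le_compat_l; unfold Rdiv.
    + replace (- (E * / INR N)) with ((- E) * / INR N) by ring. apply Rmult_le_compat_r. left; apply Rinv_0_lt_compat; lra. lra.
    + apply Rmult_le_compat_r. left; apply Rinv_0_lt_compat; lra. lra.
  - replace (Finite (pp t j)) with (Finite (pp t j - E * 0)) by (f_equal; ring).
    apply is_lim_seq_minus'. apply is_lim_seq_const.
    unfold Rdiv. apply (is_lim_seq_scal_l (fun N => / INR N) E 0). 
    replace (Finite 0) with (Rbar_inv p_infty) by reflexivity.
    apply is_lim_seq_inv. apply is_lim_seq_INR. discriminate.
  - replace (Finite (pp t j)) with (Finite (pp t j + E * 0)) by (f_equal; ring).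
    apply is_lim_seq_plus'. apply is_lim_seq_const.
    unfold Rdiv. apply (is_lim_seq_scal_l (fun N => / INR N) E 0). 
    replace (Finite 0) with (Rbar_inv p_infty) by reflexivity.
    apply is_lim_seq_inv. apply is_lim_seq_INR. discriminate.
Qed.

Record jet := mkJ { c0 : R; c1 : R; c2 : R; c3 : R; c4 : R; c5 : R }.

Definition jadd (a b : jet) := mkJ (c0 a + c0 b) (c1 a + c1 b) (c2 a + c2 b) (c3 a + c3 b) (c4 a + c4 b) (c5 a + c5 b).
Definition jsub (a b : jet) := mkJ (c0 a - c0 b) (c1 a - c1 b) (c2 a - c2 b) (c3 a - c3 b) (c4 a - c4 b) (c5 a - c5 b).
Definition jscal (r : R) (a : jet) := mkJ (r * c0 a) (r * c1 a) (r * c2 a) (r * c3 a) (r * c4 a) (r * c5 a).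
Definition jmul (a b : jet) := mkJ
  (c0 a * c0 b)
  (c0 a * c1 b + c1 a * c0 b)
  (c0 a * c2 b + c1 a * c1 b + c2 a * c0 b)
  (c0 a * c3 b + c1 a * c2 b + c2 a * c1 b + c3 a * c0 b)
  (c0 a * c4 b + c1 a * c3 b + c2 a * c2 b + c3 a * c1 b + c4 a * c0 b)
  (c0 a * c5 b + c1 a * c4 b + c2 a * c3 b + c3 a * c2 b + c4 a * c1 b + c5 a * c0 b).
Definition jc (r : R) := mkJ r 0 0 0 0 0.
Definition jone := jc 1.

Definition jE := mkJ 1 1 (/2) (/6) (/24) (/120).
Definition jEi := mkJ 1 (-1) (/2) (-/6) (/24) (-/120).

Definition jinv (a : jet) : jet :=
  let u := jsub a jone in
  let u2 := jmul u u in let u3 := jmul u2 u in let u4 := jmul u3 u in let u5 := jmul u4 u in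
  jadd (jsub (jadd (jsub (jsub jone u) u3) u2) u5) u4.
Definition jlog (a : jet) : jet :=
  let u := jsub a jone in
  let u2 := jmul u u in let u3 := jmul u2 u in let u4 := jmul u3 u in let u5 := jmul u4 u in
  jadd (jsub (jadd (jsub u (jscal (/2) u2)) (jscal (/3) u3)) (jscal (/4) u4)) (jscal (/5) u5).

Lemma jet_ext a b : c0 a = c0 b -> c1 a = c1 b -> c2 a = c2 b -> c3 a = c3 b -> c4 a = c4 b -> c5 a = c5 b -> a = b.
Proof. destruct a, b; simpl; intros; subst; reflexivity. Qed.

Ltac jsolve := 
  repeat match goal with a : jet |- _ => destruct a end;
  apply jet_ext; simpl in *; subst; field.

Definition jlogE (a : jet) : jet :=
  let u1 := c1 a in let u2 := c2 a in let u3 := c3 a in let u4 := c4 a in let u5 := c5 a in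
  mkJ 0 u1 (u2 - u1*u1/2) (u3 - u1*u2 + u1*u1*u1/3)
      (u4 - (u1*u3 + u2*u2/2) + u1*u1*u2 - u1*u1*u1*u1/4)
      (u5 - (u1*u4 + u2*u3) + (u1*u1*u3 + u1*u2*u2) - u1*u1*u1*u2 + u1*u1*u1*u1*u1/5).
Definition jinvE (a : jet) : jet :=
  let u1 := c1 a in let u2 := c2 a in let u3 := c3 a in let u4 := c4 a in let u5 := c5 a in
  mkJ 1 (-u1) (-u2 + u1*u1) (-u3 + 2*u1*u2 - u1*u1*u1)
      (-u4 + 2*u1*u3 + u2*u2 - 3*u1*u1*u2 + u1*u1*u1*u1)
      (-u5 + 2*u1*u4 + 2*u2*u3 - 3*u1*u1*u3 - 3*u1*u2*u2 + 4*u1*u1*u1*u2 - u1*u1*u1*u1*u1).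

Section Pows.
Variables u1 u2 u3 u4 u5 : R.
Let u := mkJ 0 u1 u2 u3 u4 u5.
Let U2 := mkJ 0 0 (u1*u1) (2*u1*u2) (2*u1*u3+u2*u2) (2*u1*u4+2*u2*u3).
Let U3 := mkJ 0 0 0 (u1*u1*u1) (3*u1*u1*u2) (3*u1*u1*u3 + 3*u1*u2*u2).
Let U4 := mkJ 0 0 0 0 (u1*u1*u1*u1) (4*u1*u1*u1*u2).
Let U5 := mkJ 0 0 0 0 0 (u1*u1*u1*u1*u1).
Lemma pw2 : jmul u u = U2. Proof. unfold jmul; apply jet_ext; simpl; ring. Qed.
Lemma pw3 : jmul U2 u = U3. Proof. unfold jmul; apply jet_ext; simpl; ring. Qed.
Lemma pw4 : jmul U3 u = U4. Proof. unfold jmul; apply jet_ext; simpl; ring. Qed.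
Lemma pw5 : jmul U4 u = U5. Proof. unfold jmul; apply jet_ext; simpl; ring. Qed.
End Pows.

Lemma sub_one a : c0 a = 1 -> jsub a jone = mkJ 0 (c1 a) (c2 a) (c3 a) (c4 a) (c5 a).
Proof. intros H. apply jet_ext; simpl; rewrite ?H; ring. Qed.

Lemma jlog_eq a : c0 a = 1 -> jlog a = jlogE a.
Proof.
  intros H. unfold jlog. rewrite (sub_one a H), pw2, pw3, pw4, pw5.
  unfold jlogE. apply jet_ext; simpl; field.
Qed.
Lemma jinv_eq a : c0 a = 1 -> jinv a = jinvE a.
Proof.
  intros H. unfold jinv. rewrite (sub_one a H), pw2, pw3, pw4, pw5.
  unfold jinvE. apply jet_ext; simpl; field.
Qed.

Lemma c0_mul a b : c0 (jmul a b) = c0 a * c0 b. Proof. reflexivity. Qed.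

Lemma jlog_mul a b : c0 a = 1 -> c0 b = 1 -> jlog (jmul a b) = jadd (jlog a) (jlog b).
Proof.
  intros Ha Hb. rewrite !jlog_eq; auto. 2: rewrite c0_mul, Ha, Hb; ring.
  destruct a, b; simpl in *; subst. unfold jlogE, jmul, jadd. apply jet_ext; simpl; field.
Qed.

Lemma jinv_mul a : c0 a = 1 -> jmul a (jinv a) = jone.
Proof.
  intros Ha. rewrite jinv_eq; auto. destruct a; simpl in *; subst. unfold jinvE, jmul, jone, jc. apply jet_ext; simpl; ring.
Qed.

Lemma jlog_one : jlog jone = jc 0.
Proof. rewrite jlog_eq by reflexivity. unfold jlogE, jone, jc. apply jet_ext; simpl; field. Qed.

Lemma jmul_comm a b : jmul a b = jmul b a.
Proof. unfold jmul; apply jet_ext; simpl; ring. Qed.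
Lemma jmul_assoc a b c : jmul a (jmul b c) = jmul (jmul a b) c.
Proof. unfold jmul; apply jet_ext; simpl; ring. Qed.
Lemma jmul_one a : jmul a jone = a.
Proof. unfold jmul, jone, jc; apply jet_ext; simpl; ring. Qed.
Lemma jinv_c0 a : c0 a = 1 -> c0 (jinv a) = 1.
Proof. intros H. rewrite jinv_eq; auto. Qed.
Lemma jinv_unique a x : c0 a = 1 -> jmul x a = jone -> x = jinv a.
Proof.
  intros Ha Hx. transitivity (jmul x (jmul a (jinv a))).
  rewrite (jinv_mul a Ha), jmul_one. reflexivity.
  rewrite jmul_assoc, Hx, jmul_comm, jmul_one. reflexivity.
Qed.
Lemma jinv_mulAB a b : c0 a = 1 -> c0 b = 1 -> jinv (jmul a b) = jmul (jinv a) (jinv b).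
Proof.
  intros Ha Hb. symmetry. apply jinv_unique. rewrite c0_mul, Ha, Hb; ring.
  replace (jmul (jmul (jinv a) (jinv b)) (jmul a b)) with (jmul (jmul a (jinv a)) (jmul b (jinv b))).
  rewrite !jinv_mul by auto. apply jmul_one.
  generalize (jinv a) (jinv b). intros x y. unfold jmul; apply jet_ext; simpl; ring.
Qed.

Definition jmix (a b : jet) : jet := jscal (/2) (jadd (jmul jE a) (jmul jEi b)).
Definition r0 := mkJ 1 0 1 (-1) (19/12) (-9/4).
Definition r1 := mkJ 1 0 (-1) (-1) (-7/12) (-1/4).
Lemma r0_fix : jmix jone r0 = r0.
Proof. unfold jmix, jscal, jadd, jmul, jE, jEi, jone, jc, r0. apply jet_ext; simpl; field. Qed.

Definition F0 (r : jet) := jmix jone r.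
Definition F1 (r : jet) := jmul r (jinv (F0 r)).

Lemma F0_c0 r : c0 r = 1 -> c0 (F0 r) = 1.
Proof. intros H. unfold F0, jmix. simpl. rewrite H. field. Qed.
Lemma F1_c0 r : c0 r = 1 -> c0 (F1 r) = 1.
Proof. intros H. unfold F1. rewrite c0_mul, jinv_c0, H. ring. apply F0_c0; auto. Qed.
Lemma jmix_gen h e ei a r : jscal h (jadd (jmul e a) (jmul ei (jmul r a))) = jmul a (jscal h (jadd (jmul e jone) (jmul ei r))).
Proof. destruct e, ei, a, r. unfold jscal, jadd, jmul, jone, jc. apply jet_ext; simpl; ring. Qed.
Lemma jmix_fact a r : jmix a (jmul r a) = jmul a (F0 r).
Proof. unfold F0, jmix. apply jmix_gen. Qed.

Definition ww : R := /100.
Definition jn1 (a : jet) := Rabs (c0 a) + Rabs (c1 a) + Rabs (c2 a) + Rabs (c3 a) + Rabs (c4 a) + Rabs (c5 a).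
Definition sc (a : jet) := mkJ (c0 a) (c1 a * ww) (c2 a * ww^2) (c3 a * ww^3) (c4 a * ww^4) (c5 a * ww^5).
Definition jn (a : jet) := jn1 (sc a).

Lemma rs x y X Y : Rabs x <= X -> Rabs y <= Y -> Rabs (x + y) <= X + Y.
Proof. intros. eapply Rle_trans. apply Rabs_triang. lra. Qed.
Lemma rm x y : Rabs (x*y) <= Rabs x * Rabs y.
Proof. rewrite Rabs_mult. lra. Qed.

Lemma jn1_mul a b : jn1 (jmul a b) <= jn1 a * jn1 b.
Proof.
  destruct a as [a0 a1 a2 a3 a4 a5], b as [b0 b1 b2 b3 b4 b5]. unfold jn1, jmul; simpl.
  assert (H0 : Rabs (a0*b0) <= Rabs a0 * Rabs b0) by apply rm.
  assert (H1 : Rabs (a0 * b1 + a1 * b0) <= Rabs a0 * Rabs b1 + Rabs a1 * Rabs b0) by (repeat apply rs; apply rm).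
  assert (H2 : Rabs (a0 * b2 + a1 * b1 + a2 * b0) <= Rabs a0 * Rabs b2 + Rabs a1 * Rabs b1 + Rabs a2 * Rabs b0) by (repeat apply rs; apply rm).
  assert (H3 : Rabs (a0 * b3 + a1 * b2 + a2 * b1 + a3 * b0) <= Rabs a0 * Rabs b3 + Rabs a1 * Rabs b2 + Rabs a2 * Rabs b1 + Rabs a3 * Rabs b0) by (repeat apply rs; apply rm).
  assert (H4 : Rabs (a0 * b4 + a1 * b3 + a2 * b2 + a3 * b1 + a4 * b0) <= Rabs a0 * Rabs b4 + Rabs a1 * Rabs b3 + Rabs a2 * Rabs b2 + Rabs a3 * Rabs b1 + Rabs a4 * Rabs b0) by (repeat apply rs; apply rm).
  assert (H5 : Rabs (a0 * b5 + a1 * b4 + a2 * b3 + a3 * b2 + a4 * b1 + a5 * b0) <= Rabs a0 * Rabs b5 + Rabs a1 * Rabs b4 + Rabs a2 * Rabs b3 + Rabs a3 * Rabs b2 + Rabs a4 * Rabs b1 + Rabs a5 * Rabs b0) by (repeat apply rs; apply rm).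
  pose proof (Rmult_le_pos _ _ (Rabs_pos a0) (Rabs_pos b0)). pose proof (Rmult_le_pos _ _ (Rabs_pos a0) (Rabs_pos b1)). pose proof (Rmult_le_pos _ _ (Rabs_pos a0) (Rabs_pos b2)). pose proof (Rmult_le_pos _ _ (Rabs_pos a0) (Rabs_pos b3)). pose proof (Rmult_le_pos _ _ (Rabs_pos a0) (Rabs_pos b4)). pose proof (Rmult_le_pos _ _ (Rabs_pos a0) (Rabs_pos b5)). pose proof (Rmult_le_pos _ _ (Rabs_pos a1) (Rabs_pos b0)). pose proof (Rmult_le_pos _ _ (Rabs_pos a1) (Rabs_pos b1)). pose proof (Rmult_le_pos _ _ (Rabs_pos a1) (Rabs_pos b2)). pose proof (Rmult_le_pos _ _ (Rabs_pos a1) (Rabs_pos b3)). pose proof (Rmult_le_pos _ _ (Rabs_pos a1) (Rabs_pos b4)). pose proof (Rmult_le_pos _ _ (Rabs_pos a1) (Rabs_pos b5)). pose proof (Rmult_le_pos _ _ (Rabs_pos a2) (Rabs_pos b0)). pose proof (Rmult_le_pos _ _ (Rabs_pos a2) (Rabs_pos b1)). pose proof (Rmult_le_pos _ _ (Rabs_pos a2) (Rabs_pos b2)). pose proof (Rmult_le_pos _ _ (Rabs_pos a2) (Rabs_pos b3)). pose proof (Rmult_le_pos _ _ (Rabs_pos a2) (Rabs_pos b4)). pose proof (Rmult_le_pos _ _ (Rabs_pos a2) (Rabs_pos b5)). pose proof (Rmult_le_pos _ _ (Rabs_pos a3) (Rabs_pos b0)). pose proof (Rmult_le_pos _ _ (Rabs_pos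 a3) (Rabs_pos b1)). pose proof (Rmult_le_pos _ _ (Rabs_pos a3) (Rabs_pos b2)). pose proof (Rmult_le_pos _ _ (Rabs_pos a3) (Rabs_pos b3)). pose proof (Rmult_le_pos _ _ (Rabs_pos a3) (Rabs_pos b4)). pose proof (Rmult_le_pos _ _ (Rabs_pos a3) (Rabs_pos b5)). pose proof (Rmult_le_pos _ _ (Rabs_pos a4) (Rabs_pos b0)). pose proof (Rmult_le_pos _ _ (Rabs_pos a4) (Rabs_pos b1)). pose proof (Rmult_le_pos _ _ (Rabs_pos a4) (Rabs_pos b2)). pose proof (Rmult_le_pos _ _ (Rabs_pos a4) (Rabs_pos b3)). pose proof (Rmult_le_pos _ _ (Rabs_pos a4) (Rabs_pos b4)). pose proof (Rmult_le_pos _ _ (Rabs_pos a4) (Rabs_pos b5)). pose proof (Rmult_le_pos _ _ (Rabs_pos a5) (Rabs_pos b0)). pose proof (Rmult_le_pos _ _ (Rabs_pos a5) (Rabs_pos b1)). pose proof (Rmult_le_pos _ _ (Rabs_pos a5) (Rabs_pos b2)). pose proof (Rmult_le_pos _ _ (Rabs_pos a5) (Rabs_pos b3)). pose proof (Rmult_le_pos _ _ (Rabs_pos a5) (Rabs_pos b4)). pose proof (Rmult_le_pos _ _ (Rabs_pos a5) (Rabs_pos b5)).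
  lra.
Qed.

Lemma sc_mul a b : sc (jmul a b) = jmul (sc a) (sc b).
Proof. destruct a, b. unfold sc, jmul. apply jet_ext; simpl; ring. Qed.
Lemma sc_add a b : sc (jadd a b) = jadd (sc a) (sc b).
Proof. destruct a, b. unfold sc, jadd. apply jet_ext; simpl; ring. Qed.
Lemma sc_sub a b : sc (jsub a b) = jsub (sc a) (sc b).
Proof. destruct a, b. unfold sc, jsub. apply jet_ext; simpl; ring. Qed.
Lemma sc_scal c a : sc (jscal c a) = jscal c (sc a).
Proof. destruct a. unfold sc, jscal. apply jet_ext; simpl; ring. Qed.

Lemma jn_mul a b : jn (jmul a b) <= jn a * jn b.
Proof. unfold jn. rewrite sc_mul. apply jn1_mul. Qed.
Lemma jn_add a b : jn (jadd a b) <= jn a + jn b.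
Proof.
  unfold jn. rewrite sc_add. destruct (sc a), (sc b). unfold jn1, jadd; simpl.
  repeat match goal with |- context [Rabs (?x + ?y)] => pose proof (Rabs_triang x y); 
     set (Rabs (x+y)) in * end. lra.
Qed.
Lemma jn_scal c a : jn (jscal c a) = Rabs c * jn a.
Proof. unfold jn. rewrite sc_scal. destruct (sc a). unfold jn1, jscal; simpl. rewrite !Rabs_mult. ring. Qed.
Lemma jn_nonneg a : 0 <= jn a.
Proof. unfold jn, jn1. repeat match goal with |- context [Rabs ?x] => pose proof (Rabs_pos x); set (Rabs x) in * end. lra. Qed.

Lemma jsub_add a b : jsub a b = jadd a (jscal (-1) b).
Proof. unfold jsub, jadd, jscal. apply jet_ext; simpl; ring. Qed.
Lemma jn_sub a b : jn (jsub a b) <= jn a + jn b.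
Proof. rewrite jsub_add. eapply Rle_trans. apply jn_add. rewrite jn_scal. replace (Rabs (-1)) with 1 by (rewrite Rabs_left; lra). lra. Qed.

Lemma jn_pow_bounds u : let n := jn u in
  jn (jmul u u) <= n^2 /\ jn (jmul (jmul u u) u) <= n^3 /\
  jn (jmul (jmul (jmul u u) u) u) <= n^4 /\ jn (jmul (jmul (jmul (jmul u u) u) u) u) <= n^5.
Proof.
  intros n. pose proof (jn_nonneg u) as Hn. fold n in Hn.
  assert (H2 : jn (jmul u u) <= n^2) by (eapply Rle_trans; [apply jn_mul|]; unfold n; simpl; lra).
  assert (H3 : jn (jmul (jmul u u) u) <= n^3).
  { eapply Rle_trans. apply jn_mul. fold n. replace (n^3) with (n^2 * n) by ring. apply Rmult_le_compat_r; auto. }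
  assert (H4 : jn (jmul (jmul (jmul u u) u) u) <= n^4).
  { eapply Rle_trans. apply jn_mul. fold n. replace (n^4) with (n^3 * n) by ring. apply Rmult_le_compat_r; auto. }
  assert (H5 : jn (jmul (jmul (jmul (jmul u u) u) u) u) <= n^5).
  { eapply Rle_trans. apply jn_mul. fold n. replace (n^5) with (n^4 * n) by ring. apply Rmult_le_compat_r; auto. }
  auto.
Qed.

Lemma jn_add_le a b A B : jn a <= A -> jn b <= B -> jn (jadd a b) <= A + B.
Proof. intros; eapply Rle_trans. apply jn_add. lra. Qed.
Lemma jn_sub_le a b A B : jn a <= A -> jn b <= B -> jn (jsub a b) <= A + B.
Proof. intros; eapply Rle_trans. apply jn_sub. lra. Qed.
Lemma jn_scal_le c a A : 0 <= c -> jn a <= A -> jn (jscal c a) <= c * A.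
Proof. intros; rewrite jn_scal, Rabs_right by lra. apply Rmult_le_compat_l; lra. Qed.

Ltac jnb H2 H3 H4 H5 := repeat first [ eapply jn_add_le | eapply jn_sub_le | (eapply jn_scal_le; [lra|]) 
   | exact H2 | exact H3 | exact H4 | exact H5 | apply Rle_refl ].

Lemma jn_log a : jn (jsub a jone) <= 1/2 -> jn (jlog a) <= 2 * jn (jsub a jone).
Proof.
  intros Hh. unfold jlog. set (u := jsub a jone) in *. clearbody u.
  destruct (jn_pow_bounds u) as (H2 & H3 & H4 & H5). set (n := jn u) in *.
  pose proof (jn_nonneg u) as Hn. fold n in Hn.
  eapply Rle_trans. jnb H2 H3 H4 H5.
  assert (n^2 <= n/2) by nra. assert (n^3 <= n/4) by nra. assert (n^4 <= n/8) by nra. assert (n^5 <= n/16) by nra.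
  change (jn u) with n. lra.
Qed.

Lemma jn_one : jn jone = 1.
Proof. unfold jn, jn1, sc, jone, jc; simpl. rewrite !Rmult_0_l, Rabs_R0, Rabs_R1. ring. Qed.

Lemma jn_inv a : jn (jsub a jone) <= 1/2 -> jn (jinv a) <= 1 + 2 * jn (jsub a jone).
Proof.
  intros Hh. unfold jinv. set (u := jsub a jone) in *. clearbody u.
  destruct (jn_pow_bounds u) as (H2 & H3 & H4 & H5). set (n := jn u) in *.
  pose proof (jn_nonneg u) as Hn. fold n in Hn.
  eapply Rle_trans. jnb H2 H3 H4 H5. rewrite jn_one. change (jn u) with n.
  assert (n^2 <= n/2) by nra. assert (n^3 <= n/4) by nra. assert (n^4 <= n/8) by nra. assert (n^5 <= n/16) by nra.
  lra.
Qed.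

Ltac rabs_num := repeat match goal with |- context [Rabs ?x] =>
   first [ rewrite (Rabs_right x) by (unfold ww; lra) | rewrite (Rabs_left x) by (unfold ww; lra) ] end.

Lemma jn_E : jn jE <= 10101/10000.
Proof. unfold jn, jn1, sc, jE; simpl. rabs_num. unfold ww. lra. Qed.
Lemma jn_Ei : jn jEi <= 10101/10000.
Proof. unfold jn, jn1, sc, jEi; simpl. rabs_num. unfold ww. lra. Qed.
Lemma jn_r01 : jn (jsub r0 r1) <= 1/4000.
Proof. unfold jn, jn1, sc, jsub, r0, r1; simpl. rabs_num. unfold ww. lra. Qed.

Lemma F0_one r : jsub (F0 r) jone = jscal (/2) (jmul jEi (jsub r r1)).
Proof. destruct r. apply jet_ext; cbv [F0 jmix jsub jscal jmul jadd jE jEi jone jc r1 c0 c1 c2 c3 c4 c5]; lra. Qed.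
Lemma F0_r0 r : jsub (F0 r) r0 = jscal (/2) (jmul jEi (jsub r r0)).
Proof. destruct r. apply jet_ext; cbv [F0 jmix jsub jscal jmul jadd jE jEi jone jc r0 c0 c1 c2 c3 c4 c5]; lra. Qed.
Lemma r1_lin r : jsub r (jmul r1 (F0 r)) = jscal (/2) (jmul jE (jsub r r1)).
Proof. destruct r. apply jet_ext; cbv [F0 jmix jsub jscal jmul jadd jE jEi jone jc r1 c0 c1 c2 c3 c4 c5]; lra. Qed.
Lemma gen_sub_mul X r F I : jmul (jsub X (jmul r F)) I = jsub (jmul X I) (jmul r (jmul F I)).
Proof. destruct X, r, F, I. unfold jsub, jmul. apply jet_ext; simpl; ring. Qed.
Lemma F1_r1 r : c0 r = 1 -> jsub (F1 r) r1 = jmul (jscal (/2) (jmul jE (jsub r r1))) (jinv (F0 r)).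
Proof.
  intros H. rewrite <- r1_lin, gen_sub_mul, jinv_mul, jmul_one by (apply F0_c0; auto). reflexivity.
Qed.
Lemma sub_tri x y z : jsub x z = jadd (jsub x y) (jsub y z).
Proof. unfold jsub, jadd. apply jet_ext; simpl; ring. Qed.

Definition RR : R := 1/100.

Lemma step_F0 r : jn (jsub r r1) <= RR -> jn (jsub (F0 r) r1) <= RR.
Proof.
  intros H. rewrite (sub_tri _ r0). eapply Rle_trans. apply jn_add.
  rewrite F0_r0, jn_scal. eapply Rle_trans. apply Rplus_le_compat_l. apply jn_r01.
  assert (Hd : jn (jsub r r0) <= RR + 1/4000).
  { rewrite (sub_tri _ r1). eapply Rle_trans. apply jn_add.
    assert (jn (jsub r1 r0) = jn (jsub r0 r1)).
    { replace (jsub r1 r0) with (jscal (-1) (jsub r0 r1)). rewrite jn_scal. 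
      rewrite Rabs_left by lra. ring. unfold jscal, jsub. apply jet_ext; simpl; ring. }
    pose proof jn_r01. lra. }
  pose proof (jn_mul jEi (jsub r r0)). pose proof jn_Ei. pose proof (jn_nonneg (jsub r r0)).
  pose proof (jn_nonneg jEi).
  rewrite Rabs_right by lra. unfold RR in *.
  assert (jn jEi * jn (jsub r r0) <= 10101/10000 * (1/100 + 1/4000)) by (apply Rmult_le_compat; lra).
  lra.
Qed.

Lemma step_F1 r : c0 r = 1 -> jn (jsub r r1) <= RR ->
  jn (jlog (F0 r)) <= 10101/10000 * jn (jsub r r1) /\
  jn (jsub (F1 r) r1) <= 52/100 * jn (jsub r r1).
Proof.
  intros Hc H. set (d := jn (jsub r r1)) in *.
  pose proof (jn_nonneg (jsub r r1)) as Hd0. fold d in Hd0.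
  assert (Hu : jn (jsub (F0 r) jone) <= 10101/20000 * d).
  { rewrite F0_one, jn_scal, Rabs_right by lra. pose proof (jn_mul jEi (jsub r r1)). fold d in H0.
    pose proof jn_Ei. pose proof (jn_nonneg jEi).
    assert (jn jEi * d <= 10101/10000 * d) by (apply Rmult_le_compat_r; lra). lra. }
  assert (Hu2 : jn (jsub (F0 r) jone) <= 1/2) by (unfold RR in H; lra).
  split.
  - eapply Rle_trans. apply jn_log; auto. lra.
  - rewrite F1_r1 by auto. eapply Rle_trans. apply jn_mul.
    rewrite jn_scal, Rabs_right by lra.
    pose proof (jn_inv _ Hu2) as Hi. pose proof (jn_mul jE (jsub r r1)) as HE. fold d in HE.
    pose proof jn_E. pose proof (jn_nonneg jE). pose proof (jn_nonneg (jinv (F0 r))).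
    pose proof (jn_nonneg (jmul jE (jsub r r1))).
    assert (A1 : jn (jmul jE (jsub r r1)) <= 10101/10000 * d).
    { eapply Rle_trans. exact HE. apply Rmult_le_compat_r; lra. }
    assert (A2 : jn (jinv (F0 r)) <= 10102/10000) by (unfold RR in H; lra).
    assert (A3 : jn (jmul jE (jsub r r1)) * jn (jinv (F0 r)) <= (10101/10000 * d) * (10102/10000))
      by (apply Rmult_le_compat; lra).
    lra.
Qed.

Definition JJ (t : nat) : jet := bval _ jone r0 jmix t.
Lemma JJ_even t : JJ (2*t) = JJ t.
Proof. apply bval_even, r0_fix. Qed.
Lemma JJ_oddm t : JJ (2*t+1) = jmix (JJ t) (JJ (S t)).
Proof. apply bval_odd, r0_fix. Qed.
Lemma JJ_0 : JJ 0 = jone. Proof. reflexivity. Qed.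
Lemma JJ_1 : JJ 1 = r0. Proof. reflexivity. Qed.

Lemma jmix_c0 a b : c0 a = 1 -> c0 b = 1 -> c0 (jmix a b) = 1.
Proof. intros Ha Hb. unfold jmix. simpl. rewrite Ha, Hb. field. Qed.

Lemma JJ_c0 t : c0 (JJ t) = 1.
Proof.
  apply (bin_ind (fun t => c0 (JJ t) = 1)); auto.
  - intros u H. rewrite JJ_even. auto.
  - intros u H H'. rewrite JJ_oddm. apply jmix_c0; auto.
Qed.

Definition rho (t : nat) : jet := jmul (JJ (S t)) (jinv (JJ t)).

Lemma JJ_S t : JJ (S t) = jmul (rho t) (JJ t).
Proof.
  unfold rho. rewrite <- jmul_assoc, (jmul_comm (jinv _)), jinv_mul by apply JJ_c0. rewrite jmul_one. reflexivity.
Qed.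
Lemma JJ_odd t : JJ (2*t+1) = jmul (JJ t) (F0 (rho t)).
Proof. rewrite JJ_oddm, JJ_S. apply jmix_fact. Qed.
Lemma rho_c0 t : c0 (rho t) = 1.
Proof. unfold rho. rewrite c0_mul, jinv_c0, JJ_c0. ring. apply JJ_c0. Qed.
Lemma rho_even t : rho (2*t) = F0 (rho t).
Proof.
  unfold rho at 1. replace (S (2*t)) with (2*t+1)%nat by lia. rewrite JJ_odd, JJ_even.
  rewrite (jmul_comm (JJ t)), <- jmul_assoc, jinv_mul by apply JJ_c0. apply jmul_one.
Qed.
Lemma gen4 r A B I : jmul (jmul r A) (jmul B I) = jmul (jmul A B) (jmul r I).
Proof. destruct r, A, B, I. unfold jmul. apply jet_ext; simpl; ring. Qed.
Lemma rho_odd t : rho (2*t+1) = F1 (rho t).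
Proof.
  unfold rho at 1. replace (S (2*t+1)) with (2*(S t))%nat by lia. rewrite JJ_even, JJ_odd, JJ_S.
  rewrite jinv_mulAB by (try apply JJ_c0; apply F0_c0, rho_c0).
  unfold F1. rewrite gen4, jinv_mul by apply JJ_c0. rewrite jmul_comm, jmul_one. reflexivity.
Qed.
Lemma rho_0 : rho 0 = r0.
Proof. unfold rho. rewrite JJ_0, JJ_1. rewrite <- (jmul_one r0) at 2. f_equal. symmetry. apply jinv_unique. reflexivity. apply jmul_one. Qed.

Definition Inv (t : nat) : Prop :=
  jn (jsub (rho t) r1) <= RR /\
  jn (jlog (JJ t)) + (if Nat.odd t then 3 * jn (jsub (rho t) r1) else 0) <= INR (blocks t).

Lemma blocks_0 : blocks 0 = 0%nat. Proof. reflexivity. Qed.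

Lemma Inv_0 : Inv 0.
Proof.
  split. rewrite rho_0. pose proof jn_r01. unfold RR. lra.
  rewrite JJ_0, jlog_one, blocks_0. simpl Nat.odd. cbv iota.
  unfold jn, jn1, sc, jc; simpl. rewrite !Rmult_0_l, Rabs_R0. simpl. lra.
Qed.

Lemma odd_2t t : Nat.odd (2*t) = false.
Proof. rewrite <- Nat.negb_even, Nat.even_mul. reflexivity. Qed.
Lemma odd_2t1 t : Nat.odd (2*t+1) = true.
Proof. rewrite Nat.odd_add, odd_2t. reflexivity. Qed.

Lemma Inv_even t : Inv t -> Inv (2*t).
Proof.
  intros [H1 H2]. split. rewrite rho_even. apply step_F0; auto.
  rewrite odd_2t, JJ_even, blocks_double. cbv iota.
  pose proof (jn_nonneg (jsub (rho t) r1)). destruct (Nat.odd t); lra.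
Qed.

Lemma Inv_odd t : Inv t -> Inv (2*t+1).
Proof.
  intros [H1 H2]. destruct (step_F1 (rho t) (rho_c0 t) H1) as [S1 S2].
  pose proof (jn_nonneg (jsub (rho t) r1)) as Hd.
  split.
  - rewrite rho_odd. unfold RR in *. lra.
  - rewrite odd_2t1, JJ_odd, blocks_double1, rho_odd. cbv iota.
    rewrite jlog_mul by (try apply JJ_c0; apply F0_c0, rho_c0).
    eapply Rle_trans. apply Rplus_le_compat_r. apply jn_add.
    rewrite plus_INR. destruct (Nat.odd t).
    + simpl (INR 0). lra.
    + simpl (INR 1). unfold RR in *. lra.
Qed.

Lemma Inv_all t : Inv t.
Proof.
  induction t as [t IH] using lt_wf_ind.
  destruct t as [|t']. apply Inv_0.
  pose proof (Nat.div2_odd (S t')) as Hd. set (u := Nat.div2 (S t')) in *.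
  assert (Hu : (u < S t')%nat) by (apply Nat.lt_div2; lia).
  rewrite Hd. destruct (Nat.odd (S t')); simpl Nat.b2n.
  - apply Inv_odd, IH, Hu.
  - rewrite Nat.add_0_r. apply Inv_even, IH, Hu.
Qed.

Lemma jlog_bound t : jn (jlog (JJ t)) <= INR (blocks t).
Proof.
  destruct (Inv_all t) as [_ H]. pose proof (jn_nonneg (jsub (rho t) r1)). destruct (Nat.odd t); lra.
Qed.

Definition inI (x : R) := Rabs x < 1/2.
Definition Fam (f : nat -> R -> R) : Prop :=
  forall k x, (k < 5)%nat -> inI x -> is_derive (f k) x (f (S k) x).

Lemma exF (f : nat -> R -> R) k x : Fam f -> (k < 5)%nat -> inI x -> ex_derive (fun y => f k y) x.
Proof. intros Hf Hk Hx. exists (f (S k) x). apply Hf; auto. Qed.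
Lemma DerF (f : nat -> R -> R) k x : Fam f -> (k < 5)%nat -> inI x -> Derive (fun y => f k y) x = f (S k) x.
Proof. intros Hf Hk Hx. apply is_derive_unique. apply Hf; auto. Qed.

Ltac side := repeat (first [ split | exact I | (apply exF; [assumption | lia | assumption]) ]).
Ltac derF := repeat match goal with |- context [Derive (fun y => ?F ?i y) ?x] =>
   rewrite (DerF F i x) by (first [assumption | lia]) end.

Definition fmul (f g : nat -> R -> R) : nat -> R -> R := fun k x =>
  match k with
  | 0%nat => f 0%nat x * g 0%nat x
  | 1%nat => f 1%nat x * g 0%nat x + f 0%nat x * g 1%nat x
  | 2%nat => f 2%nat x * g 0%nat x + 2 * f 1%nat x * g 1%nat x + f 0%nat x * g 2%nat x
  | 3%nat => f 3%nat x * g 0%nat x + 3 * f 2%nat x * g 1%nat x + 3 * f 1%nat x * g 2%nat x + f 0%nat x * g 3%nat x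
  | 4%nat => f 4%nat x * g 0%nat x + 4 * f 3%nat x * g 1%nat x + 6 * f 2%nat x * g 2%nat x + 4 * f 1%nat x * g 3%nat x + f 0%nat x * g 4%nat x
  | _ => f 5%nat x * g 0%nat x + 5 * f 4%nat x * g 1%nat x + 10 * f 3%nat x * g 2%nat x + 10 * f 2%nat x * g 3%nat x + 5 * f 1%nat x * g 4%nat x + f 0%nat x * g 5%nat x
  end.

Lemma Fam_mul f g : Fam f -> Fam g -> Fam (fmul f g).
Proof.
  intros Hf Hg k x Hk Hx.
  destruct k as [|[|[|[|[|k]]]]]; try lia; unfold fmul; auto_derive; side; derF; ring.
Qed.

Definition fconst (c : R) : nat -> R -> R := fun k x => match k with O => c | _ => 0 end.
Definition fexp (a : R) : nat -> R -> R := fun k x => a ^ k * exp (a * x).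
Definition fadd (f g : nat -> R -> R) : nat -> R -> R := fun k x => f k x + g k x.
Definition fscal (c : R) (f : nat -> R -> R) : nat -> R -> R := fun k x => c * f k x.

Lemma Fam_const c : Fam (fconst c).
Proof. intros k x Hk Hx. unfold fconst. destruct k; auto_derive; auto. Qed.
Lemma Fam_exp a : Fam (fexp a).
Proof. intros k x Hk Hx. unfold fexp. auto_derive; auto. simpl. ring. Qed.
Lemma Fam_add f g : Fam f -> Fam g -> Fam (fadd f g).
Proof. intros Hf Hg k x Hk Hx. unfold fadd. apply (is_derive_plus (f k) (g k)); auto. Qed.
Lemma Fam_scal c f : Fam f -> Fam (fscal c f).
Proof. intros Hf k x Hk Hx. unfold fscal. apply (is_derive_scal (f k)); auto. Qed.

Definition fdb (h g : nat -> R) (k : nat) : R :=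
  match k with
  | 0%nat => h 0%nat
  | 1%nat => h 1%nat * g 1%nat
  | 2%nat => h 2%nat * g 1%nat ^ 2 + h 1%nat * g 2%nat
  | 3%nat => h 3%nat * g 1%nat ^ 3 + 3 * h 2%nat * g 1%nat * g 2%nat + h 1%nat * g 3%nat
  | 4%nat => h 4%nat * g 1%nat ^ 4 + 6 * h 3%nat * g 1%nat ^ 2 * g 2%nat + 3 * h 2%nat * g 2%nat ^ 2
             + 4 * h 2%nat * g 1%nat * g 3%nat + h 1%nat * g 4%nat
  | _ => h 5%nat * g 1%nat ^ 5 + 10 * h 4%nat * g 1%nat ^ 3 * g 2%nat + 15 * h 3%nat * g 1%nat * g 2%nat ^ 2
         + 10 * h 3%nat * g 1%nat ^ 2 * g 3%nat + 10 * h 2%nat * g 2%nat * g 3%nat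
         + 5 * h 2%nat * g 1%nat * g 4%nat + h 1%nat * g 5%nat
  end.

Definition Hln (k : nat) (y : R) : R :=
  match k with
  | 0%nat => ln y | 1%nat => / y | 2%nat => - / y ^ 2 | 3%nat => 2 / y ^ 3 | 4%nat => - 6 / y ^ 4 | _ => 24 / y ^ 5
  end.
Definition Hinv (k : nat) (y : R) : R :=
  match k with
  | 0%nat => / y | 1%nat => - / y ^ 2 | 2%nat => 2 / y ^ 3 | 3%nat => - 6 / y ^ 4 | 4%nat => 24 / y ^ 5 | _ => - 120 / y ^ 6
  end.

Definition fcomp (H : nat -> R -> R) (g : nat -> R -> R) : nat -> R -> R :=
  fun k x => fdb (fun i => H i (g 0%nat x)) (fun j => g j x) k.

Ltac nz := repeat apply Rmult_integral_contrapositive_currified; apply Rgt_not_eq; lra.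

Lemma Fam_ln g : Fam g -> (forall x, inI x -> 0 < g 0%nat x) -> Fam (fcomp Hln g).
Proof.
  intros Hg Hp k x Hk Hx. specialize (Hp x Hx).
  destruct k as [|[|[|[|[|k]]]]]; try lia; unfold fcomp, fdb, Hln; auto_derive; side; auto; try nz;
   derF; field; lra.
Qed.
Lemma Fam_inv g : Fam g -> (forall x, inI x -> 0 < g 0%nat x) -> Fam (fcomp Hinv g).
Proof.
  intros Hg Hp k x Hk Hx. specialize (Hp x Hx).
  destruct k as [|[|[|[|[|k]]]]]; try lia; unfold fcomp, fdb, Hinv; auto_derive; side; auto; try nz;
   derF; field; lra.
Qed.

Lemma locI x : inI x -> locally x inI.
Proof.
  intros Hx. unfold inI in *.
  assert (He : 0 < 1/2 - Rabs x) by lra.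
  exists (mkposreal _ He). intros y Hy. unfold ball in Hy; simpl in Hy.
  unfold AbsRing_ball, abs, minus, plus, opp in Hy; simpl in Hy.
  pose proof (Rabs_triang_inv y x). unfold Rminus in *. lra.
Qed.

Lemma Derive_n_fam f : Fam f -> forall k x, (k <= 5)%nat -> inI x -> Derive_n (f 0%nat) k x = f k x.
Proof.
  intros Hf k. induction k as [|k IH]; intros x Hk Hx. reflexivity.
  simpl. rewrite (Derive_ext_loc _ (f k)).
  apply is_derive_unique. apply Hf; auto; lia.
  generalize (locI x Hx). apply filter_imp. intros y Hy. apply IH; auto; lia.
Qed.

Definition fjet (f : nat -> R -> R) : jet :=
  mkJ (f 0%nat 0) (f 1%nat 0) (f 2%nat 0 / 2) (f 3%nat 0 / 6) (f 4%nat 0 / 24) (f 5%nat 0 / 120).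

Lemma fjet_mul f g : fjet (fmul f g) = jmul (fjet f) (fjet g).
Proof. unfold fjet, fmul, jmul. apply jet_ext; simpl; field. Qed.
Lemma fjet_add f g : fjet (fadd f g) = jadd (fjet f) (fjet g).
Proof. unfold fjet, fadd, jadd. apply jet_ext; simpl; field. Qed.
Lemma fjet_scal c f : fjet (fscal c f) = jscal c (fjet f).
Proof. unfold fjet, fscal, jscal. apply jet_ext; simpl; field. Qed.
Lemma fjet_const c : fjet (fconst c) = jc c.
Proof. unfold fjet, fconst, jc. apply jet_ext; simpl; field. Qed.
Lemma fjet_exp1 : fjet (fexp 1) = jE.
Proof. unfold fjet, fexp, jE. rewrite Rmult_0_r, exp_0. apply jet_ext; simpl; field. Qed.
Lemma fjet_expm1 : fjet (fexp (-1)) = jEi.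
Proof. unfold fjet, fexp, jEi. rewrite Rmult_0_r, exp_0. apply jet_ext; simpl; field. Qed.
Lemma fjet_inv g : g 0%nat 0 = 1 -> fjet (fcomp Hinv g) = jinvE (fjet g).
Proof. intros H. unfold fjet, fcomp, fdb, Hinv, jinvE. rewrite H. apply jet_ext; simpl; field. Qed.
Lemma fjet_ln g : g 0%nat 0 = 1 -> fjet (fcomp Hln g) = jlogE (fjet g).
Proof. intros H. unfold fjet, fcomp, fdb, Hln, jlogE. rewrite H, ln_1. apply jet_ext; simpl; field. Qed.

Lemma ser_scal (c : R) (a : nat -> R) (l : R) : is_series a l -> is_series (fun n => c * a n) (c * l).
Proof. intros H. exact (is_series_scal_l c a l H). Qed.
Lemma ser_plus (a b : nat -> R) (la lb : R) : is_series a la -> is_series b lb -> is_series (fun n => a n + b n) (la + lb).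
Proof. intros H1 H2. exact (is_series_plus a b la lb H1 H2). Qed.
Lemma ser_decr (a : nat -> R) (l : R) : is_series (fun k => a (S k)) (l - a 0%nat) -> is_series a l.
Proof. intros H. apply is_series_decr_1. exact H. Qed.
Lemma ser_incr (a : nat -> R) (l : R) : is_series a l -> is_series (fun k => a (S k)) (l - a 0%nat).
Proof. intros H. apply is_series_incr_1. match goal with |- is_series _ ?v => replace v with l end. exact H.
  unfold plus; simpl. ring. Qed.
Lemma ser_zero : is_series (fun _ => 0) 0.
Proof.
  assert (H : Rabs (/2) < 1) by (rewrite Rabs_right; lra).
  pose proof (is_series_scal_r 0 _ _ (is_series_geom _ H)).
  eapply is_series_ext; [|rewrite <- (Rmult_0_r (/ (1 - /2))); exact H0]. intros; simpl; ring.
Qed.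
Lemma ser_ext (a b : nat -> R) (l l' : R) : (forall n, a n = b n) -> l = l' -> is_series a l -> is_series b l'.
Proof. intros H -> H'. eapply is_series_ext; eauto. Qed.

Definition aS (p : Z -> R) (x : R) (k : nat) : R := p (Z.of_nat k) * exp (INR k * x).
Definition bS (p : Z -> R) (x : R) (k : nat) : R := p (- Z.of_nat (S k))%Z * exp (- INR (S k) * x).

Definition Good (t : nat) : Prop :=
  exists f, Fam f /\ fjet f = JJ t /\ forall x, inI x -> 0 < f 0%nat x /\
    exists A B, is_series (aS (pp t) x) A /\ is_series (bS (pp t) x) B /\ A + B = f 0%nat x.

Lemma Good_even t : Good t -> Good (2*t).
Proof. intros H. unfold Good. rewrite pp_even, JJ_even. exact H. Qed.

Lemma expS k x : exp (INR (S k) * x) = exp x * exp (INR k * x).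
Proof. rewrite <- exp_plus, S_INR. f_equal. ring. Qed.
Lemma expmS k x : exp (- INR (S k) * x) = exp (- x) * exp (- INR k * x).
Proof. rewrite <- exp_plus, S_INR. f_equal. ring. Qed.
Lemma exp_inv_mul x : exp x * exp (- x) = 1.
Proof. rewrite <- exp_plus, Rplus_opp_r. apply exp_0. Qed.

Definition fodd (f g : nat -> R -> R) := fscal (/2) (fadd (fmul (fexp 1) f) (fmul (fexp (-1)) g)).

Lemma Good_odd t : Good t -> Good (S t) -> Good (2*t+1).
Proof.
  intros (f & Hf & Jf & Pf) (g & Hg & Jg & Pg).
  exists (fodd f g). split; [|split].
  - unfold fodd. apply Fam_scal, Fam_add; apply Fam_mul; auto; apply Fam_exp.
  - unfold fodd. rewrite fjet_scal, fjet_add, !fjet_mul, fjet_exp1, fjet_expm1, Jf, Jg, JJ_oddm. reflexivity.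
  - intros x Hx. destruct (Pf x Hx) as (Pf0 & A1 & B1 & HA1 & HB1 & E1).
    destruct (Pg x Hx) as (Pg0 & A2 & B2 & HA2 & HB2 & E2).
    assert (Hv : fodd f g 0%nat x = /2 * (exp x * f 0%nat x + exp (-x) * g 0%nat x)).
    { unfold fodd, fscal, fadd, fmul, fexp. simpl. replace (1 * x) with x by ring. replace (-1 * x) with (-x) by ring. ring. }
    rewrite Hv. split.
    { pose proof (exp_pos x). pose proof (exp_pos (-x)). apply Rmult_lt_0_compat. lra.
      apply Rplus_lt_0_compat; apply Rmult_lt_0_compat; auto. }
    pose proof (exp_inv_mul x) as EE.
    assert (S1 : is_series (fun k => pp t (Z.of_nat k - 1)%Z * exp (INR k * x)) (exp x * A1 + pp t (-1)%Z)).
    { apply ser_decr. eapply ser_ext; [| | apply (ser_scal (exp x)); exact HA1].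
      - intros n. unfold aS. rewrite expS. replace (Z.of_nat (S n) - 1)%Z with (Z.of_nat n) by lia. ring.
      - simpl. rewrite Rmult_0_l, exp_0. ring. }
    assert (S2 : is_series (fun k => pp (S t) (Z.of_nat k + 1)%Z * exp (INR k * x)) (exp (-x) * (A2 - pp (S t) 0%Z))).
    { eapply ser_ext; [| | apply (ser_scal (exp (-x))); apply ser_incr; exact HA2].
      - intros n. unfold aS. rewrite expS. replace (Z.of_nat (S n)) with (Z.of_nat n + 1)%Z by lia.
        replace (exp (- x) * (pp (S t) (Z.of_nat n + 1)%Z * (exp x * exp (INR n * x)))) with
          (pp (S t) (Z.of_nat n + 1)%Z * exp (INR n * x) * (exp x * exp (-x))) by ring. rewrite EE. ring.
      - unfold aS. simpl. rewrite Rmult_0_l, exp_0. ring. }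
    assert (T1 : is_series (fun k => pp t (- Z.of_nat (S k) - 1)%Z * exp (- INR (S k) * x)) (exp x * B1 - pp t (-1)%Z)).
    { eapply ser_ext; [| | apply (ser_scal (exp x)); apply ser_incr; exact HB1].
      - intros n. unfold bS. rewrite (expmS (S n)). replace (- Z.of_nat (S (S n)))%Z with (- Z.of_nat (S n) - 1)%Z by lia.
        replace (exp x * (pp t (- Z.of_nat (S n) - 1)%Z * (exp (- x) * exp (- INR (S n) * x)))) with
          (pp t (- Z.of_nat (S n) - 1)%Z * exp (- INR (S n) * x) * (exp x * exp (- x))) by ring. rewrite EE. ring.
      - unfold bS. replace (- INR 1 * x) with (-x) by (simpl; ring). simpl (- Z.of_nat 1)%Z.
        replace (exp x * (B1 - pp t (-1)%Z * exp (- x))) with (exp x * B1 - pp t (-1)%Z * (exp x * exp (-x))) by ring.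
        rewrite EE. ring. }
    assert (T2 : is_series (fun k => pp (S t) (- Z.of_nat (S k) + 1)%Z * exp (- INR (S k) * x)) (exp (-x) * B2 + exp (-x) * pp (S t) 0%Z)).
    { apply ser_decr. eapply ser_ext; [| | apply (ser_scal (exp (-x))); exact HB2].
      - intros n. unfold bS. rewrite (expmS (S n)). replace (- Z.of_nat (S (S n)) + 1)%Z with (- Z.of_nat (S n))%Z by lia. ring.
      - replace (- INR 1 * x) with (-x) by (simpl; ring). simpl (- Z.of_nat 1 + 1)%Z. ring. }
    exists (/2 * ((exp x * A1 + pp t (-1)%Z) + exp (-x) * (A2 - pp (S t) 0%Z))).
    exists (/2 * ((exp x * B1 - pp t (-1)%Z) + (exp (-x) * B2 + exp (-x) * pp (S t) 0%Z))).
    split; [|split].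
    + eapply ser_ext; [| | apply (ser_scal (/2)); apply ser_plus; [exact S1 | exact S2]].
      * intros n. unfold aS. rewrite pp_odd. field.
      * reflexivity.
    + eapply ser_ext; [| | apply (ser_scal (/2)); apply ser_plus; [exact T1 | exact T2]].
      * intros n. unfold bS. rewrite pp_odd. field.
      * reflexivity.
    + rewrite <- E1, <- E2. ring.
Qed.

Lemma Good_0 : Good 0.
Proof.
  exists (fconst 1). split; [apply Fam_const|split].
  - rewrite fjet_const, JJ_0. reflexivity.
  - intros x Hx. simpl. split. lra. exists 1, 0. split; [|split; [|ring]].
    + apply ser_decr. eapply ser_ext; [| |exact ser_zero].
      * intros n. unfold aS. rewrite pp_0. unfold p0. simpl. ring.
      * unfold aS. rewrite pp_0. unfold p0. simpl. rewrite Rmult_0_l, exp_0. ring.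
    + eapply ser_ext; [| |exact ser_zero]. intros n. unfold aS, bS. rewrite pp_0. unfold p0.
      destruct (Z.eqb_spec (- Z.of_nat (S n)) 0); [lia|]. ring. reflexivity.
Qed.

Definition gg := fadd (fconst 2) (fscal (-1) (fexp (-1))).
Definition G1 := fmul (fexp 1) (fcomp Hinv gg).

Lemma exp_half : exp (1/2) < 2.
Proof.
  pose proof exp_le_3. assert (H2 : exp (1/2) * exp (1/2) = exp 1) by (rewrite <- exp_plus; f_equal; field).
  pose proof (exp_pos (1/2)). nra.
Qed.

Lemma gg_val x : gg 0%nat x = 2 - exp (- x).
Proof. unfold gg, fadd, fconst, fscal, fexp. simpl. replace (-1*x) with (-x) by ring. ring. Qed.

Lemma gg_pos x : inI x -> 0 < gg 0%nat x.
Proof.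
  intros Hx. rewrite gg_val. unfold inI in Hx. apply Rabs_def2 in Hx.
  assert (exp (-x) < exp (1/2)) by (apply exp_increasing; lra). pose proof exp_half. lra.
Qed.

Lemma expm_pow n x : exp (- INR n * x) = exp (- x) ^ n.
Proof.
  induction n as [|n IH]. simpl. replace (-0*x) with 0 by ring. apply exp_0.
  rewrite expmS, IH. simpl. ring.
Qed.

Lemma Good_1 : Good 1.
Proof.
  exists G1. split; [|split].
  - unfold G1. apply Fam_mul. apply Fam_exp. apply Fam_inv. unfold gg. apply Fam_add. apply Fam_const.
    apply Fam_scal, Fam_exp. apply gg_pos.
  - unfold G1. rewrite fjet_mul, fjet_exp1, fjet_inv, JJ_1.
    2: { rewrite gg_val. rewrite Ropp_0, exp_0. ring. }
    unfold gg. rewrite fjet_add, fjet_scal, fjet_const, fjet_expm1.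
    unfold jinvE, jmul, jadd, jscal, jc, jE, jEi, r0. apply jet_ext; simpl; field.
  - intros x Hx. 
    assert (Hv : G1 0%nat x = exp x / (2 - exp (-x))).
    { unfold G1, fmul, fcomp, fdb, Hinv, fexp. rewrite gg_val. simpl. replace (1*x) with x by ring. field.
      pose proof (gg_pos x Hx). rewrite gg_val in H. lra. }
    pose proof (gg_pos x Hx) as Hg. rewrite gg_val in Hg. pose proof (exp_pos x). pose proof (exp_pos (-x)).
    rewrite Hv. split. apply Rdiv_lt_0_compat; lra.
    pose proof (exp_inv_mul x) as EE.
    exists (/4 + exp x / 2), (exp (-x) / 8 * / (1 - exp (-x) / 2)).
    split; [|split].
    + apply ser_decr. apply ser_decr. eapply ser_ext; [| |exact ser_zero].
      * intros n. unfold aS. rewrite pp_1. unfold p1. destruct (Z.leb_spec (Z.of_nat (S (S n))) 1); [lia|]. ring.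
      * unfold aS. rewrite pp_1. unfold p1. simpl. rewrite Rmult_0_l, exp_0, Rmult_1_l. field.
    + eapply ser_ext; [| | apply (ser_scal (exp (-x) / 8)); apply (is_series_geom (exp (-x) / 2))].
      * intros n. unfold bS. rewrite pp_1. unfold p1. destruct (Z.leb_spec (- Z.of_nat (S n)) 1); [|lia].
        replace (Z.to_nat (2 - - Z.of_nat (S n))) with (3 + n)%nat by lia.
        rewrite expm_pow, pow_add. unfold Rdiv. rewrite Rpow_mult_distr. simpl. field.
      * reflexivity.
      * rewrite Rabs_right by lra. lra.
    + assert (Ex : exp x = / exp (-x)).
      { apply (Rmult_eq_reg_r (exp (-x))). rewrite EE. field. lra. lra. }
      rewrite Ex. field. repeat split; lra.
Qed.

Lemma Good_all t : Good t.
Proof. apply (bin_ind Good Good_0 Good_1 Good_even Good_odd t). Qed.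

Lemma mgf_eq t f : (forall x, inI x -> 0 < f 0%nat x /\
    exists A B, is_series (aS (pp t) x) A /\ is_series (bS (pp t) x) B /\ A + B = f 0%nat x) ->
  forall x, inI x -> mgf t x = f 0%nat x.
Proof.
  intros Pf x Hx. destruct (Pf x Hx) as (_ & A & B & HA & HB & E).
  unfold mgf. rewrite <- E, <- (is_series_unique _ _ HA), <- (is_series_unique _ _ HB).
  f_equal; apply Series_ext; intros n.
  unfold aS; rewrite delta_pp; reflexivity.
  unfold bS; rewrite delta_pp; reflexivity.
Qed.

Lemma coef_bounds a : Rabs (c2 a) * ww^2 <= jn a /\ Rabs (c3 a) * ww^3 <= jn a /\
  Rabs (c4 a) * ww^4 <= jn a /\ Rabs (c5 a) * ww^5 <= jn a.
Proof.
  unfold jn, jn1, sc; cbn [c0 c1 c2 c3 c4 c5].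
  assert (Hw : 0 < ww) by (unfold ww; lra).
  rewrite !Rabs_mult. rewrite !(Rabs_right (ww ^ _)) by (apply Rle_ge, pow_le; lra).
  try rewrite (Rabs_right ww) by lra.
  pose proof (Rabs_pos (c0 a)). pose proof (Rabs_pos (c1 a)). pose proof (Rabs_pos (c2 a)).
  pose proof (Rabs_pos (c3 a)). pose proof (Rabs_pos (c4 a)). pose proof (Rabs_pos (c5 a)).
  assert (0 <= Rabs (c1 a) * ww) by (apply Rmult_le_pos; lra).
  assert (0 <= Rabs (c2 a) * ww^2) by (apply Rmult_le_pos; [lra| apply pow_le; lra]).
  assert (0 <= Rabs (c3 a) * ww^3) by (apply Rmult_le_pos; [lra| apply pow_le; lra]).
  assert (0 <= Rabs (c4 a) * ww^4) by (apply Rmult_le_pos; [lra| apply pow_le; lra]).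
  assert (0 <= Rabs (c5 a) * ww^5) by (apply Rmult_le_pos; [lra| apply pow_le; lra]).
  repeat split; lra.
Qed.

Definition CC : R := 120 * 100^5.

Lemma cum_main t : forall k, (2 <= k <= 5)%nat -> Rabs (cumulant t k) <= CC * INR (blocks t).
Proof.
  intros k Hk.
  destruct (Good_all t) as (f & Hf & Jf & Pf).
  assert (Hpos : forall x, inI x -> 0 < f 0%nat x) by (intros x Hx; apply Pf; auto).
  assert (F0 : f 0%nat 0 = 1).
  { change (c0 (fjet f) = 1). rewrite Jf. apply JJ_c0. }
  set (L := fcomp Hln f).
  assert (HL : Fam L) by (apply Fam_ln; auto).
  assert (I0 : inI 0) by (unfold inI; rewrite Rabs_R0; lra).
  assert (Hc : cumulant t k = L k 0).
  { unfold cumulant. rewrite (Derive_n_ext_loc _ (L 0%nat)).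
    apply Derive_n_fam; auto; lia.
    generalize (locI 0 I0). apply filter_imp. intros y Hy.
    unfold L, fcomp, fdb, Hln. rewrite (mgf_eq t f Pf y Hy). reflexivity. }
  assert (HJ : fjet L = jlog (JJ t)).
  { unfold L. rewrite fjet_ln by auto. rewrite jlog_eq by apply JJ_c0. rewrite Jf. reflexivity. }
  pose proof (jlog_bound t) as Hb.
  destruct (coef_bounds (jlog (JJ t))) as (B2 & B3 & B4 & B5).
  assert (E2 : c2 (jlog (JJ t)) = L 2%nat 0 / 2) by (rewrite <- HJ; reflexivity).
  assert (E3 : c3 (jlog (JJ t)) = L 3%nat 0 / 6) by (rewrite <- HJ; reflexivity).
  assert (E4 : c4 (jlog (JJ t)) = L 4%nat 0 / 24) by (rewrite <- HJ; reflexivity).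
  assert (E5 : c5 (jlog (JJ t)) = L 5%nat 0 / 120) by (rewrite <- HJ; reflexivity).
  rewrite E2 in B2. rewrite E3 in B3. rewrite E4 in B4. rewrite E5 in B5.
  clearbody L.
  rewrite Hc. unfold CC.
  pose proof (pos_INR (blocks t)).
  assert (Hw : ww = /100) by reflexivity.
  destruct k as [|[|[|[|[|[|k]]]]]]; try lia.
  - replace (L 2%nat 0) with (2 * (L 2%nat 0 / 2)) by field.
    rewrite Rabs_mult, Rabs_right by lra. rewrite Hw in B2.
    assert (Rabs (L 2%nat 0 / 2) <= 100^2 * INR (blocks t)).
    { apply (Rmult_le_reg_r ((/100)^2)). apply pow_lt; lra.
      replace (100 ^ 2 * INR (blocks t) * (/ 100) ^ 2) with (INR (blocks t)) by field. lra. }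
    nra.
  - replace (L 3%nat 0) with (6 * (L 3%nat 0 / 6)) by field.
    rewrite Rabs_mult, Rabs_right by lra. rewrite Hw in B3.
    assert (Rabs (L 3%nat 0 / 6) <= 100^3 * INR (blocks t)).
    { apply (Rmult_le_reg_r ((/100)^3)). apply pow_lt; lra.
      replace (100 ^ 3 * INR (blocks t) * (/ 100) ^ 3) with (INR (blocks t)) by field. lra. }
    nra.
  - replace (L 4%nat 0) with (24 * (L 4%nat 0 / 24)) by field.
    rewrite Rabs_mult, Rabs_right by lra. rewrite Hw in B4.
    assert (Rabs (L 4%nat 0 / 24) <= 100^4 * INR (blocks t)).
    { apply (Rmult_le_reg_r ((/100)^4)). apply pow_lt; lra.
      replace (100 ^ 4 * INR (blocks t) * (/ 100) ^ 4) with (INR (blocks t)) by field. lra. }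
    nra.
  - replace (L 5%nat 0) with (120 * (L 5%nat 0 / 120)) by field.
    rewrite Rabs_mult, Rabs_right by lra. rewrite Hw in B5.
    assert (Rabs (L 5%nat 0 / 120) <= 100^5 * INR (blocks t)).
    { apply (Rmult_le_reg_r ((/100)^5)). apply pow_lt; lra.
      replace (100 ^ 5 * INR (blocks t) * (/ 100) ^ 5) with (INR (blocks t)) by field. lra. }
    nra.
Qed.

Theorem corollary2p3 :
  exists C : R, forall t : nat,
    Rabs (cumulant t 2) <= C * INR (blocks t) /\
    Rabs (cumulant t 3) <= C * INR (blocks t) /\
    Rabs (cumulant t 4) <= C * INR (blocks t) /\
    Rabs (cumulant t 5) <= C * INR (blocks t).
Proof.
  exists CC. intros t. repeat split; apply cum_main; lia.
Qed.
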